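(* Assume $M$ has genus zero and $a\in(0,1)$, $b\in(0,1]$. Let $\alpha=\ln\big(\frac{1-a}{b}\big)$ and $\beta=\ln\big(1+\frac{q'a}{1-a}\big)$, and let $\tilde\mu$ be the probability measure on $(\mathrm s,\mathrm s')\in Q^{\mathsf V}\times Q'^{\mathsf V}$ given by $$\tilde\mu(\mathrm s,\mathrm s')\propto\exp\Big(\sum_{\{v_1,v_2\}\in\mathsf E}\delta_{\mathrm s(v_1),\mathrm s(v_2)}\big(\alpha+\beta\,\delta_{\mathrm s'(v_1),\mathrm s'(v_2)}\big)\Big),$$ where $\delta_{x,y}=1$ if $x=y$ and $0$ otherwise. Then the law of $\sigma$ under $\mathbf P$ equals the law of $\mathrm s$ under $\tilde\mu$.
   Context: $M$ is the sphere or the plane. Let $\mathsf G=(\mathsf V,\mathsf E)$ be a finite connected graph embedded in $M$ with all faces topological discs, and $\mathsf G^*=(\mathsf U,\mathsf E^* )$ its embedded dual ($\mathsf U$ = faces of $\mathsf G$); $e^*$ is the dual edge crossing $e$, $\xi^*=\{e^*:e\in\xi\}$. Fix integers $q,q'\ge1$ and finite $Q,Q'\subset\mathbb C$ with $Q=-Q$, $Q'=-Q'$, $|Q|=q$, $|Q'|=q'$. For $\sigma:\mathsf V\to Q$, $\eta(\sigma)\subseteq\mathsf E^*$ is the set of $e^*$ whose primal $e$ has endpoints with different $\sigma$-values; for $\sigma':\mathsf U\to Q'$, $\eta(\sigma')\subseteq\mathsf E$ is the set of $e$ whose dual $e^*$ has endpoints with different $\sigma'$-values. $\mathbf P(\sigma,\sigma')\propto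 a^{|\eta(\sigma')|}b^{|\eta(\sigma)|}$ on $\Sigma=\{(\sigma,\sigma')\in Q^{\mathsf V}\times Q'^{\mathsf U}:\eta(\sigma)^*\cap\eta(\sigma')=\emptyset\}$. *)

(* Defs.v *)
From mathcomp Require Import all_boot all_order all_algebra finmap fingroup perm.
From mathcomp Require Import complex.
From mathcomp Require Import all_classical all_reals all_analysis.

Set Implicit Arguments.
Unset Strict Implicit.
Unset Printing Implicit Defensive.

Import GRing.Theory Num.Theory.

(* A finite connected graph cellularly embedded in a closed orientable surface,
   given combinatorially as a rotation system (combinatorial map):
   - darts [dart]; [alpha] is the fixed-point-free involution exchanging the two
     darts (half-edges) of an edge; [rho] rotates the darts around their vertex;
   - vertices are the [rho]-orbits, edges the [alpha]-orbits, faces the orbits of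
     [phi := rho \o alpha];
   - vertex / edge / face types are given with the quotient maps [vert], [edge],
     [face], whose fibers are exactly the corresponding orbits.
   The dart [d] goes out of vertex [vert d] along edge [edge d] to vertex
   [vert (alpha d)]; the two faces incident to this edge (the endpoints of the
   dual edge) are [face d] and [face (alpha d)]. *)
Record emb_graph := EmbGraph {
  dart : finType;
  vtx : finType;
  edg : finType;
  fac : finType;
  alpha : {perm dart};
  rho : {perm dart};
  vert : dart -> vtx;
  edge : dart -> edg;
  face : dart -> fac;
  alpha_invol : forall d, alpha (alpha d) = d;
  alpha_nofix : forall d, alpha d != d;
  vert_surj : forall v, exists d, vert d = v;
  edge_surj : forall e, exists d, edge d = e;
  face_surj : forall f, exists d, face d = f;
  vert_fiber : forall d1 d2, vert d1 = vert d2 <-> fconnect rho d1 d2;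
  edge_fiber : forall d1 d2, edge d1 = edge d2 <-> fconnect alpha d1 d2;
  face_fiber : forall d1 d2,
    face d1 = face d2 <-> fconnect (fun x => rho (alpha x)) d1 d2;
  connected : forall d1 d2,
    connect (fun x y => (y == alpha x) || (y == rho x)) d1 d2
}.

Arguments alpha {_}.
Arguments rho {_}.
Arguments vert {_}.
Arguments edge {_}.
Arguments face {_}.

Definition genus_zero (G : emb_graph) : Prop :=
  (#|vtx G| + #|fac G| = #|edg G| + 2)%N.

Section Models.
Variable G : emb_graph.
Variables (S S' : finType).

(* |eta(sigma)|: number of (primal) edges whose endpoints carry different
   sigma-values (= number of dual edges in eta(sigma)). *)
Definition eta_V (sg : vtx G -> S) : nat :=
  #|[set e : edg G | [exists d : dart G,
      (edge d == e) && (sg (vert d) != sg (vert (alpha d)))]]|.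

(* |eta(sigma')|: number of edges e whose dual edge e* has endpoints (faces)
   carrying different sigma'-values. *)
Definition eta_U (sg' : fac G -> S') : nat :=
  #|[set e : edg G | [exists d : dart G,
      (edge d == e) && (sg' (face d) != sg' (face (alpha d)))]]|.

Definition in_Sigma (sg : vtx G -> S) (sg' : fac G -> S') : bool :=
  [forall e : edg G, ~~ (
     [exists d : dart G, (edge d == e) && (sg (vert d) != sg (vert (alpha d)))]
  && [exists d : dart G, (edge d == e) && (sg' (face d) != sg' (face (alpha d)))])].

Variable R : realType.
Local Open Scope ring_scope.

Definition wP (a b : R) (sg : {ffun vtx G -> S}) (sg' : {ffun fac G -> S'}) : R :=
  if in_Sigma sg sg' then a ^+ eta_U sg' * b ^+ eta_V sg else 0.

Definition lawP (a b : R) (s : {ffun vtx G -> S}) : R :=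
  (\sum_(sg' : {ffun fac G -> S'}) wP a b s sg') /
  (\sum_(sg : {ffun vtx G -> S}) \sum_(sg' : {ffun fac G -> S'}) wP a b sg sg').

Definition delta_edge (T : eqType) (s : vtx G -> T) (e : edg G) : bool :=
  [exists d : dart G, (edge d == e) && (s (vert d) == s (vert (alpha d)))].

Definition wMu (al be : R) (s : {ffun vtx G -> S}) (s' : {ffun vtx G -> S'}) : R :=
  expR (\sum_(e : edg G)
          (delta_edge s e)%:R * (al + be * (delta_edge s' e)%:R)).

Definition lawMu (al be : R) (s : {ffun vtx G -> S}) : R :=
  (\sum_(s' : {ffun vtx G -> S'}) wMu al be s s') /
  (\sum_(t : {ffun vtx G -> S}) \sum_(s' : {ffun vtx G -> S'}) wMu al be t s').

End Models.

(* Main.v *)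
Require Import Defs.
From mathcomp Require Import all_boot all_order all_algebra finmap fingroup perm.
From mathcomp Require Import complex.
From mathcomp Require Import all_classical all_reals all_analysis.
From mathcomp Require Import zify ring lra.
Set Implicit Arguments.
Unset Strict Implicit.
Unset Printing Implicit Defensive.
Import GRing.Theory Num.Theory.

Lemma connect_pred_ind (T : finType) (e : rel T) (a : pred T) :
  (forall u v, e u v -> a u -> a v) -> forall u v, connect e u v -> a u -> a v.
Proof.
move=> H u v /connectP[p pp ->]; elim: p u pp => //= w p IH u /andP[euw pw] au.
exact: IH pw (H _ _ euw au).
Qed.

Section GenS.
Variables (W Ed : finType) (x y : Ed -> W).
Implicit Types (t : {set Ed}) (e : Ed) (u v w : W).

Definition gadj (t : {set Ed}) : rel W := fun u v =>
  [exists e in t, ((x e == u) && (y e == v)) || ((x e == v) && (y e == u))].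

Lemma adj_sym t : symmetric (gadj t).
Proof.
move=> u v; apply/existsP/existsP => -[e He]; exists e;
  by rewrite orbC.
Qed.

Lemma con_sym t : connect_sym (gadj t).
Proof. exact: sym_connect_sym (adj_sym t). Qed.

Definition kc t := #|(fingraph.root (gadj t)) @: [set: W]|.

Lemma adj_edge t e : e \in t -> connect (gadj t) (x e) (y e).
Proof. by move=> He; apply: connect1; apply/existsP; exists e; rewrite He !eqxx. Qed.

Lemma con_trans3 t u v w : connect (gadj t) u v -> connect (gadj t) w v ->
  connect (gadj t) u w.
Proof. by move=> h1 h2; apply: connect_trans h1 _; rewrite con_sym. Qed.

Local Notation cn t := (connect (gadj t)).

Lemma con_add t e u v : connect (gadj (e |: t)) u v ->
  connect (gadj t) u v ||
  ((connect (gadj t) u (x e) || connect (gadj t) u (y e)) &&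
   (connect (gadj t) v (x e) || connect (gadj t) v (y e))).
Proof.
move=> H.
pose P := fun w => cn t w (x e) || cn t w (y e).
suff hcl : forall v1 w1, gadj (e |: t) v1 w1 -> cn t u v1 || (P u && P v1) -> cn t u w1 || (P u && P w1).
  by have := @connect_pred_ind _ _ [pred w | cn t u w || (P u && P w)] hcl u v H; apply; rewrite /= connect0.
move=> v1 w1 /existsP[e' /andP[He' Hend]] /= /orP Hv.
have cvw : e' \in t -> cn t v1 w1.
  move=> Ht; case/orP: Hend => /andP[/eqP <- /eqP <-]; first exact: adj_edge.
  by rewrite con_sym; apply: adj_edge.
case/finset.setU1P: He' => [Ee|Ht]; last first.
  case: Hv => [cuv|/andP[Pu Pv]].
    by rewrite (connect_trans cuv (cvw Ht)).
  apply/orP; right; rewrite Pu /P /=.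
  have cwv : cn t w1 v1 by rewrite con_sym; exact: cvw.
  by case/orP: Pv => h; rewrite (connect_trans cwv h) ?orbT.
subst e'.
have [Pv Pw] : P v1 /\ P w1.
  by rewrite /P; case/orP: Hend => /andP[/eqP <- /eqP <-]; rewrite !connect0 ?orbT.
case: Hv => [cuv|/andP[Pu _]]; last by rewrite Pu Pw orbT.
apply/orP; right; rewrite Pw andbT /P.
by case/orP: Pv => h; rewrite (connect_trans cuv h) ?orbT.
Qed.

Lemma kc_add_le t e : kc t <= (kc (e |: t)).+1.
Proof.
rewrite /kc (cardsD1 (fingraph.root (gadj t) (x e))).
set Rt := fingraph.root (gadj t) @: [set: W].
set g := fingraph.root (gadj (e |: t)).
have inj : {in Rt :\ fingraph.root (gadj t) (x e) &, injective g}.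
  move=> r1 r2 /finset.setD1P[n1 /imsetP[v1 _ E1]] /finset.setD1P[n2 /imsetP[v2 _ E2]]; subst r1 r2 => /= Hg.
  have c12 : connect (gadj (e |: t)) (fingraph.root (gadj t) v1) (fingraph.root (gadj t) v2).
    by apply/(fingraph.rootP (con_sym _)).
  apply/(fingraph.rootP (con_sym _)).
  move: (con_add c12) => /orP[|/andP[]].
    have h1 := connect_root (gadj t) v1; have h2 := connect_root (gadj t) v2.
    move=> h; apply: connect_trans h1 _; apply: connect_trans h _.
    by rewrite con_sym.
  have nx : forall v, fingraph.root (gadj t) v != fingraph.root (gadj t) (x e) ->
      ~~ connect (gadj t) (fingraph.root (gadj t) v) (x e).
    move=> v nv; apply: contra nv => h.
    by apply/eqP; rewrite -(fingraph.root_root (con_sym t) v); apply/fingraph.rootP => //; exact: con_sym.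
  move/negPf: (nx _ n1) => -> /= h1; move/negPf: (nx _ n2) => -> /= h2.
  apply: connect_trans (connect_root _ v1) _; apply: connect_trans (con_trans3 h1 h2) _.
  by rewrite con_sym; exact: connect_root.
rewrite -(card_in_imset inj).
have : #|g @: (Rt :\ fingraph.root (gadj t) (x e))| <= #|g @: [set: W]|.
  by apply: subset_leq_card; apply: imsetS; apply: finset.subsetT.
by case: (_ \in _) => /=; rewrite ?add0n ?add1n // => h; apply: leqW.
Qed.

Lemma kc_add_eq t e : connect (gadj t) (x e) (y e) -> kc (e |: t) = kc t.
Proof.
move=> cxy.
have eqc : connect (gadj (e |: t)) =2 connect (gadj t).
  move=> u v; apply/idP/idP.
    move/con_add => /orP[//|/andP[/orP[]h1 /orP[]h2]].
    - exact: con_trans3 h1 h2.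
    - by apply: con_trans3 h1 _; apply: connect_trans h2 _; rewrite con_sym.
    - by apply: con_trans3 h1 _; apply: connect_trans h2 cxy.
    - exact: con_trans3 h1 h2.
  apply: connect_sub => u' v' h; apply: connect1.
  case/existsP: h => e' /andP[h1 h2]; apply/existsP; exists e'.
  by rewrite h2 setU1r.
have eqr : fingraph.root (gadj (e |: t)) =1 fingraph.root (gadj t).
  by move=> v; rewrite /fingraph.root (eq_pick (eqc v)).
by rewrite /kc (eq_imset _ eqr).
Qed.

Lemma kc0 : kc finset.set0 = #|W|.
Proof.
rewrite /kc card_imset ?cardsT // => u v /(fingraph.rootP (con_sym _)) /connectP[[|w p]] /=.
  by move=> _ ->.
by case/andP=> /existsP[e]; rewrite inE.
Qed.

Lemma kc_le1 t : (forall u v, connect (gadj t) u v) -> kc t <= 1.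
Proof.
move=> H; apply/card_le1_eqP => r1 r2 /imsetP[v1 _ ->] /imsetP[v2 _ ->].
by apply/fingraph.rootP; [exact: con_sym | exact: H].
Qed.

Definition compat (T : eqType) t (c : W -> T) := [forall e in t, c (x e) == c (y e)].

Lemma compat_con (T : eqType) t (c : W -> T) u v :
  compat t c -> connect (gadj t) u v -> c u = c v.
Proof.
move=> hc h; apply/eqP; apply: (@connect_pred_ind _ _ [pred w | c u == c w] _ u v h) => //=.
move=> v1 w1 /existsP[e /andP[He Hend]] /= /eqP ->.
have := forallP hc e; rewrite He /= => /eqP hce.
by case/orP: Hend => /andP[/eqP <- /eqP <-]; rewrite hce.
Qed.

Lemma card_compat (T : finType) t :
  #|[set c : {ffun W -> T} | compat t c]| = #|T| ^ kc t.
Proof.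
set Rt := fingraph.root (gadj t) @: [set: W].
pose RT := {r : W | r \in Rt}.
have rin : forall v, fingraph.root (gadj t) v \in Rt by move=> v; apply: imset_f; rewrite inE.
pose Psi (f : {ffun RT -> T}) : {ffun W -> T} :=
  [ffun v => f (exist _ (fingraph.root (gadj t) v) (rin v))].
have rr : forall r, r \in Rt -> fingraph.root (gadj t) r = r.
  by move=> r /imsetP[v _ ->]; rewrite fingraph.root_root //; exact: con_sym.
have injP : injective Psi.
  move=> f g hfg; apply/ffunP => -[r Hr].
  have := congr1 (fun h : {ffun W -> T} => h r) hfg; rewrite /Psi !ffunE.
  have -> : exist (fun r0 => r0 \in Rt) (fingraph.root (gadj t) r) (rin r) = exist _ r Hr.
    by apply: val_inj; rewrite /= rr.
  by [].
have -> : [set c : {ffun W -> T} | compat t c] = Psi @: [set: {ffun RT -> T}].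
  apply/setP => c; rewrite inE; apply/idP/imsetP.
    move=> hc; exists [ffun r : RT => c (val r)]; first by rewrite inE.
    apply/ffunP => v; rewrite /Psi !ffunE /=.
    by apply: compat_con hc _; apply: connect_root.
  move=> [f _ ->]; apply/forallP => e; apply/implyP => He.
  rewrite /Psi !ffunE; apply/eqP; congr (f _); apply: val_inj => /=.
  by apply/fingraph.rootP; [exact: con_sym | exact: adj_edge].
rewrite card_imset // cardsT card_ffun card_sig.
by [].
Qed.

Local Open Scope ring_scope.
Lemma FK (R : comNzRingType) (T : finType) (g : Ed -> bool -> R) :
  \sum_(c : {ffun W -> T}) \prod_e g e (c (x e) == c (y e)) =
  \sum_(t : {set Ed}) (\prod_e (if e \in t then g e true - g e false else g e false))
      * (#|[set c : {ffun W -> T} | compat t c]|)%:R.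
Proof.
have step : forall c : {ffun W -> T}, \prod_e g e (c (x e) == c (y e)) =
   \sum_(t : {set Ed}) (\prod_e (if e \in t then g e true - g e false else g e false))
      * (compat t c)%:R.
  move=> c.
  have -> : \prod_e g e (c (x e) == c (y e)) =
    \prod_e ((g e true - g e false) * (c (x e) == c (y e))%:R + g e false).
    by apply: eq_bigr => e _; case: (_ == _); rewrite ?mulr1 ?mulr0 ?add0r ?subrK.
  rewrite bigA_distr; apply: eq_bigr => t _.
  rewrite -[X in _ = _ * X]/(nat_of_bool _)%:R.
  have -> : \prod_e (if e \in t then (g e true - g e false) * (c (x e) == c (y e))%:R
                      else g e false) =
    (\prod_e (if e \in t then g e true - g e false else g e false)) *
    \prod_e (if e \in t then (c (x e) == c (y e))%:R else 1).
    rewrite -big_split /=; apply: eq_bigr => e _.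
    by case: (e \in t); rewrite ?mulr1.
  congr (_ * _).
  case hc: (compat t c).
    by rewrite big1 // => e _; have := forallP hc e; case: (e \in t) => //= /eqP ->; rewrite eqxx.
  move/negbT: hc => /forallPn[e]; rewrite negb_imply => /andP[He Hne].
  by rewrite (bigD1 e) //= He (negPf Hne) mul0r.
under eq_bigr => c _ do rewrite step.
rewrite exchange_big /=.
apply: eq_bigr => t _; rewrite -mulr_sumr; congr (_ * _).
rewrite -sum1_card natr_sum [RHS]big_mkcond /=; apply: eq_bigr => c _; rewrite inE.
by case: (compat t c).
Qed.

End GenS.

Section Map.
Variable G : emb_graph.
Implicit Types (t : {set edg G}) (e : edg G) (z d : dart G).

Lemma ex_rep e : exists d : dart G, edge d == e.
Proof. by case: (edge_surj e) => d <-; exists d. Qed.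
Definition rep e := xchoose (ex_rep e).
Lemma edge_rep e : edge (rep e) = e.
Proof. exact: (eqP (xchooseP (ex_rep e))). Qed.

Lemma fcon_alpha d1 d2 : fconnect alpha d1 d2 -> d2 = d1 \/ d2 = alpha d1.
Proof.
move=> h.
suff hcl : forall u v, frel alpha u v -> (u == d1) || (u == alpha d1) -> (v == d1) || (v == alpha d1).
  have := @connect_pred_ind _ (frel alpha) [pred z | (z == d1) || (z == alpha d1)] hcl d1 d2 h.
  by rewrite /= eqxx => /(_ isT) /orP[] /eqP; auto.
move=> u v /= /eqP <- /orP[] /eqP ->; first by rewrite eqxx orbT.
by rewrite alpha_invol eqxx.
Qed.

Lemma dart_rep z : z = rep (edge z) \/ z = alpha (rep (edge z)).
Proof.
have /(edge_fiber _ _).1 h : edge (rep (edge z)) = edge z by rewrite edge_rep.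
by case: (fcon_alpha h); auto.
Qed.

Definition xv e := vert (rep e).
Definition yv e := vert (alpha (rep e)).
Definition xf e := face (rep e).
Definition yf e := face (alpha (rep e)).

Lemma vert_rho z : vert (rho z) = vert z.
Proof. by apply/esym/(vert_fiber _ _).2; exact: fconnect1. Qed.

Lemma face_rho z : face (rho z) = face (alpha z).
Proof.
apply/esym/(face_fiber _ _).2.
have -> : rho z = (fun x => rho (alpha x)) (alpha z) by rewrite /= alpha_invol.
exact: fconnect1.
Qed.

Lemma adjv_dart t z : edge z \in t -> connect (gadj xv yv t) (vert z) (vert (alpha z)).
Proof.
move=> h; case: (dart_rep z) => E; rewrite E.
  exact: adj_edge h.
by rewrite alpha_invol con_sym; exact: adj_edge h.
Qed.

Lemma adjf_dart t z : edge z \in t -> connect (gadj xf yf t) (face z) (face (alpha z)).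
Proof.
move=> h; case: (dart_rep z) => E; rewrite E.
  exact: adj_edge h.
by rewrite alpha_invol con_sym; exact: adj_edge h.
Qed.

Lemma exists_edge (P : pred (dart G)) e : (forall d, P (alpha d) = P d) ->
  [exists d, (edge d == e) && P d] = P (rep e).
Proof.
move=> hP; apply/existsP/idP.
  move=> [d /andP[/eqP Ed Pd]]; case: (dart_rep d) => E; move: Pd; rewrite E Ed //.
  by rewrite hP.
by move=> h; exists (rep e); rewrite edge_rep eqxx.
Qed.

Lemma topo t e : e \notin t -> ~~ connect (gadj xv yv t) (xv e) (yv e) ->
  connect (gadj xf yf (~: (e |: t))) (xf e) (yf e).
Proof.
move=> et; apply: contraR => ncf; apply/negPn/negP => ncv.
set d := rep e.
pose U := fun v => connect (gadj xv yv t) (vert d) v.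
pose X := fun f => connect (gadj xf yf (~: (e |: t))) (face d) f.
have Uclosed : forall z, edge z \in t -> U (vert z) = U (vert (alpha z)).
  move=> z hz; have h := adjv_dart hz; rewrite /U; apply/idP/idP => h1.
    exact: connect_trans h1 h.
  by apply: connect_trans h1 _; rewrite con_sym.
have Xclosed : forall z, edge z \in ~: (e |: t) -> X (face z) = X (face (alpha z)).
  move=> z hz; have h := adjf_dart hz; rewrite /X; apply/idP/idP => h1.
    exact: connect_trans h1 h.
  by apply: connect_trans h1 _; rewrite con_sym.
pose A := [set z | U (vert z) && X (face z)].
pose B := [set z | U (vert (alpha z)) && X (face z)].
have cAB : #|A| = #|B|.
  rewrite -(card_preimset _ (@perm_inj _ rho)) -(card_preimset B (@perm_inj _ alpha)).
  apply: eq_card => z; rewrite !inE vert_rho face_rho.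
  by rewrite alpha_invol.
pose S1 := [set z | U (vert z) && X (face z) && ~~ U (vert (alpha z))].
pose S2 := [set z | U (vert (alpha z)) && X (face z) && ~~ U (vert z)].
have cS : #|S1| = #|S2|.
  have e1 := cardsID [set z | U (vert (alpha z))] A.
  have e2 := cardsID [set z | U (vert z)] B.
  have eI : A :&: [set z | U (vert (alpha z))] = B :&: [set z | U (vert z)].
    by apply/setP => z; rewrite !inE; case: (U _); case: (U _); case: (X _).
  have eS1 : A :\: [set z | U (vert (alpha z))] = S1.
    by apply/setP => z; rewrite !inE andbC.
  have eS2 : B :\: [set z | U (vert z)] = S2.
    by apply/setP => z; rewrite !inE andbC.
  rewrite -eS1 -eS2; move: e1 e2; rewrite eI cAB => e1 e2.
  by apply/eqP; rewrite -(eqn_add2l #|B :&: [set z | U (vert z)]|) e1 e2.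
have dS1 : d \in S1.
  rewrite !inE /U /X !connect0 /=.
  exact: ncv.
have sub : alpha @: S2 \subset S1 :\ d.
  apply/fintype.subsetP => w /imsetP[y]; rewrite !inE => /andP[/andP[Uay Xy] nUy] ->.
  have et' : edge y \notin t.
    by apply: contra nUy => hy; rewrite (Uclosed _ hy).
  have yd : y != d.
    by apply: contra nUy => /eqP ->; rewrite /U connect0.
  have yad : y != alpha d.
    by apply: contraNneq ncf => E; move: Xy; rewrite E.
  have ey : edge y != e.
    apply/negP => /eqP Ey; case: (dart_rep y); rewrite Ey -/d => E.
      by move: yd; rewrite E eqxx.
    by move: yad; rewrite E eqxx.
  have hy : edge y \in ~: (e |: t) by rewrite !inE negb_or ey.
  rewrite alpha_invol Uay nUy -(Xclosed _ hy) Xy /= andbT.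
  by apply: contra yad => /eqP <-; rewrite alpha_invol.
have := subset_leq_card sub.
rewrite card_imset; last exact: perm_inj.
by rewrite -cS (cardsD1 d S1) dS1 add1n ltnn.
Qed.


Definition kv t := kc xv yv t.
Definition kf t := kc xf yf t.

Lemma step t e : e \notin t -> (kv t + kf (~: (e |: t)) <= kv (e |: t) + 1 + kf (~: t))%N.
Proof.
move=> et.
have ct : ~: t = e |: ~: (e |: t).
  apply/setP => z; rewrite !inE negb_or.
  by case: (eqVneq z e) => [->|] //=; rewrite (negPf et).
rewrite /kv /kf.
case: (boolP (connect (gadj xv yv t) (xv e) (yv e))) => h.
  rewrite (kc_add_eq h) ct; have := kc_add_le xf yf (~: (e |: t)) e; lia.
have hf := topo et h.
rewrite ct (kc_add_eq hf); have := kc_add_le xv yv t e; lia.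
Qed.

Definition hh t : int := (kv t)%:Z + (#|t|)%:Z - (kf (~: t))%:Z.

Lemma hh_mono t e : (hh t <= hh (e |: t))%R.
Proof.
case: (boolP (e \in t)) => et.
  by rewrite (finset.setUidPr _) // finset.sub1set.
have := step et; rewrite /hh cardsU1 et; lia.
Qed.

Lemma hh_ge0 t : (hh finset.set0 <= hh t)%R.
Proof.
move: {2}#|t| (erefl #|t|) => n; elim: n t => [|n IH] t ht.
  by rewrite (cards0_eq ht).
have : t != finset.set0 by rewrite -card_gt0 ht.
case/finset.set0Pn => e et.
rewrite -(finset.setD1K et); apply: Order.POrderTheory.le_trans (hh_mono _ _).
by apply: IH; move: ht; rewrite (cardsD1 e) et add1n => -[].
Qed.

Lemma hh_leT t : (hh t <= hh finset.setT)%R.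
Proof.
move: {2}#|~: t| (erefl #|~: t|) => n; elim: n t => [|n IH] t ht.
  by rewrite -[t]finset.setCK (cards0_eq ht) finset.setC0.
have : ~: t != finset.set0 by rewrite -card_gt0 ht.
case/finset.set0Pn => e et.
apply: Order.POrderTheory.le_trans (hh_mono t e) _; apply: IH.
have -> : ~: (e |: t) = (~: t) :\ e by apply/setP => z; rewrite !inE negb_or andbC.
by move: ht; rewrite (cardsD1 e) et add1n => -[].
Qed.

Lemma conv_all u v : connect (gadj xv yv finset.setT) u v.
Proof.
case: (vert_surj u) => d1 <-; case: (vert_surj v) => d2 <-.
suff hcl : forall x y, ((y == alpha x) || (y == rho x)) -> connect (gadj xv yv finset.setT) (vert d1) (vert x) -> connect (gadj xv yv finset.setT) (vert d1) (vert y).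
  by have := @connect_pred_ind _ _ [pred d | connect (gadj xv yv finset.setT) (vert d1) (vert d)] hcl d1 d2 (Defs.connected d1 d2); apply; rewrite /= connect0.
move=> x y /orP[] /eqP -> /= h.
  by apply: connect_trans h _; apply: adjv_dart; rewrite inE.
by rewrite vert_rho.
Qed.

Lemma conf_all u v : connect (gadj xf yf finset.setT) u v.
Proof.
case: (face_surj u) => d1 <-; case: (face_surj v) => d2 <-.
suff hcl : forall x y, ((y == alpha x) || (y == rho x)) -> connect (gadj xf yf finset.setT) (face d1) (face x) -> connect (gadj xf yf finset.setT) (face d1) (face y).
  by have := @connect_pred_ind _ _ [pred d | connect (gadj xf yf finset.setT) (face d1) (face d)] hcl d1 d2 (Defs.connected d1 d2); apply; rewrite /= connect0.
move=> x y /orP[] /eqP -> /= h.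
  by apply: connect_trans h _; apply: adjf_dart; rewrite inE.
by rewrite face_rho; apply: connect_trans h _; apply: adjf_dart; rewrite inE.
Qed.

Lemma duality : genus_zero G -> forall t, (kf (~: t) + #|vtx G| = kv t + #|t| + 1)%N.
Proof.
rewrite /genus_zero => gz t.
have h1 := hh_ge0 t; have h2 := hh_leT t.
move: h1 h2; rewrite /hh finset.setC0 finset.setCT cards0 cardsT /kv /kf kc0 kc0.
have := kc_le1 (@conf_all); have := kc_le1 (@conv_all).
lia.
Qed.

End Map.

Section Main.
Variables (G : emb_graph) (S S' : finType) (R : realType).
Implicit Types (t : {set edg G}) (e : edg G).

Lemma delta_rep (T : eqType) (s : vtx G -> T) e : delta_edge s e = (s (xv e) == s (yv e)).
Proof.
rewrite /delta_edge (@exists_edge G (fun d => s (vert d) == s (vert (alpha d)))) //.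
by move=> d; rewrite alpha_invol eq_sym.
Qed.

Lemma ndelta_v (s : vtx G -> S) e :
  [exists d, (edge d == e) && (s (vert d) != s (vert (alpha d)))] = (s (xv e) != s (yv e)).
Proof.
rewrite (@exists_edge G (fun d => s (vert d) != s (vert (alpha d)))) //.
by move=> d; rewrite alpha_invol eq_sym.
Qed.

Lemma ndelta_f (s : fac G -> S') e :
  [exists d, (edge d == e) && (s (face d) != s (face (alpha d)))] = (s (xf e) != s (yf e)).
Proof.
rewrite (@exists_edge G (fun d => s (face d) != s (face (alpha d)))) //.
by move=> d; rewrite alpha_invol eq_sym.
Qed.

Local Open Scope ring_scope.

Lemma prod_if1 (z : R) (P : pred (edg G)) :
  \prod_e (if P e then 1 else z) = z ^+ #|[set e | ~~ P e]|.
Proof.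
rewrite -prodr_const.
rewrite [RHS]big_mkcond /=; apply: eq_bigr => e _; rewrite inE.
by case: (P e).
Qed.

Variables (a b : R).

Definition gL (s : vtx G -> S) e (dl : bool) : R :=
  if s (xv e) == s (yv e) then (if dl then 1 else a) else (if dl then b else 0).

Lemma wP_prod (s : {ffun vtx G -> S}) (s' : {ffun fac G -> S'}) :
  wP a b s s' = \prod_e gL s e (s' (xf e) == s' (yf e)).
Proof.
rewrite /wP /in_Sigma /eta_U /eta_V.
case: ifP => hS.
  have -> : \prod_e gL s e (s' (xf e) == s' (yf e)) =
     \prod_e ((if s' (xf e) == s' (yf e) then 1 else a) * (if s (xv e) == s (yv e) then 1 else b)).
    apply: eq_bigr => e _; have := forallP hS e; rewrite ndelta_v ndelta_f /gL.
    by case: (_ == _); case: (_ == _); rewrite ?mulr1 ?mul1r.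
  rewrite big_split /= !prod_if1; congr (_ ^+ _ * _ ^+ _); apply: eq_card => e; rewrite !inE.
    by rewrite ndelta_f.
  by rewrite ndelta_v.
move/negbT: hS => /forallPn[e]; rewrite negbK ndelta_v ndelta_f => /andP[h1 h2].
by rewrite (bigD1 e) //= /gL (negPf h1) (negPf h2) mul0r.
Qed.

Variables (EA EB : R).
Definition gR (s : vtx G -> S) e (dl : bool) : R :=
  if s (xv e) == s (yv e) then EA * (if dl then EB else 1) else 1.

Lemma wMu_prod (al be : R) (s : {ffun vtx G -> S}) (s' : {ffun vtx G -> S'}) :
  expR al = EA -> expR be = EB ->
  wMu al be s s' = \prod_e gR s e (s' (xv e) == s' (yv e)).
Proof.
move=> hA hB; rewrite /wMu expR_sum; apply: eq_bigr => e _.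
rewrite !delta_rep /gR.
case: (_ == _); last by rewrite mul0r expR0.
rewrite mul1r expRD hA; case: (_ == _); first by rewrite mulr1 hB.
by rewrite mulr0 expR0.
Qed.

Lemma per_edge (s : vtx G -> S) e (inT : bool) :
  0 < a < 1 -> 0 < b -> EA = (1 - a) / b -> EB = 1 + (#|S'|)%:R * a / (1 - a) ->
  b * (if inT then gR s e true - gR s e false else gR s e false) =
  (if inT then (#|S'|)%:R else 1) * (if ~~ inT then gL s e true - gL s e false else gL s e false).
Proof.
move=> /andP[a0 a1] b0 hA hB.
have b0' : b != 0 by rewrite lt0r_neq0.
have a1' : 1 - a != 0 by rewrite lt0r_neq0 // subr_gt0.
rewrite /gR /gL; case: (_ == _); case: inT => /=; rewrite ?hA ?hB.
- by field; rewrite b0' a1'.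
- by field; rewrite b0'.
- by rewrite subrr !mulr0.
- by rewrite subr0 mulr1 mul1r.
Qed.

Lemma main_id (s : {ffun vtx G -> S}) :
  genus_zero G -> 0 < a < 1 -> 0 < b -> EA = (1 - a) / b -> EB = 1 + (#|S'|)%:R * a / (1 - a) ->
  (#|S'|%:R) ^+ #|vtx G| * \sum_(s' : {ffun fac G -> S'}) \prod_e gL s e (s' (xf e) == s' (yf e)) =
  (#|S'|%:R) * b ^+ #|edg G| * \sum_(s' : {ffun vtx G -> S'}) \prod_e gR s e (s' (xv e) == s' (yv e)).
Proof.
move=> gz ha hb hA hB.
rewrite (@FK _ _ (@xf G) (@yf G)) (@FK _ _ (@xv G) (@yv G)) !mulr_sumr.
rewrite [in LHS](reindex_inj (@finset.setC_inj _)) /=; apply: eq_bigr => t _.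
rewrite !card_compat !natrX.
set Q := (#|S'|%:R : R).
set PL := \prod_e _.
set PR := \prod_e _.
have hprod : b ^+ #|edg G| * PR = Q ^+ #|t| * PL.
  have : \prod_e (b * (if e \in t then gR s e true - gR s e false else gR s e false)) =
         \prod_e ((if e \in t then Q else 1) * (if e \in ~: t then gL s e true - gL s e false else gL s e false)).
    by apply: eq_bigr => e _; rewrite per_edge // inE.
  rewrite !big_split /= -big_mkcond /= !prodr_const.
  by move=> <-.
have dual := duality gz t.
rewrite mulrCA -exprD addnC dual !exprD expr1.
transitivity (Q * (b ^+ #|edg G| * PR) * Q ^+ kv t); last by ring.
rewrite hprod /kv; ring.
Qed.

Lemma law_eq (al be : R) (s : {ffun vtx G -> S}) :
  (0 < #|S'|)%N -> genus_zero G -> 0 < a < 1 -> 0 < b ->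
  expR al = EA -> expR be = EB ->
  EA = (1 - a) / b -> EB = 1 + (#|S'|)%:R * a / (1 - a) ->
  @lawP G S S' R a b s = @lawMu G S S' R al be s.
Proof.
move=> q0 gz ha hb eA eB hA hB.
set Q := (#|S'|%:R : R).
have Q0 : Q != 0 by rewrite /Q pnatr_eq0 -lt0n.
have QV0 : Q ^+ #|vtx G| != 0 by rewrite expf_neq0.
have b0 : b != 0 by rewrite lt0r_neq0.
set K := Q * b ^+ #|edg G| / Q ^+ #|vtx G|.
have K0 : K != 0 by rewrite /K !mulf_neq0 ?invr_eq0 ?expf_neq0.
have hn : forall t : {ffun vtx G -> S},
    \sum_(s' : {ffun fac G -> S'}) wP a b t s' = K * \sum_(s' : {ffun vtx G -> S'}) wMu al be t s'.
  move=> t; apply: (mulfI QV0).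
  under eq_bigr => s' _ do rewrite wP_prod.
  under [in RHS]eq_bigr => s' _ do rewrite (wMu_prod _ _ eA eB).
  rewrite (main_id t gz ha hb hA hB) /K.
  by field.
rewrite /lawP /lawMu.
have hd : \sum_(sg : {ffun vtx G -> S}) \sum_(sg' : {ffun fac G -> S'}) wP a b sg sg' =
    K * \sum_(t : {ffun vtx G -> S}) \sum_(s' : {ffun vtx G -> S'}) wMu al be t s'.
  by rewrite mulr_sumr; apply: eq_bigr => t _; exact: hn.
by rewrite hd hn invfM [K * _]mulrC -mulrA (mulrA K) mulfV // mul1r.
Qed.

End Main.

Local Open Scope ring_scope.

Theorem theorem3p2 (R : realType) (G : emb_graph)
  (Q Q' : {fset R[i]})
  (HQ : forall x, x \in Q -> - x \in Q) (HQ' : forall x, x \in Q' -> - x \in Q')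
  (HQ0 : (0 < #|` Q|)%N) (HQ'0 : (0 < #|` Q'|)%N)
  (a b : R) (ha : 0 < a < 1) (hb : 0 < b <= 1) :
  genus_zero G ->
  let al := ln ((1 - a) / b) in
  let be := ln (1 + (#|` Q'|)%:R * a / (1 - a)) in
  forall s : {ffun vtx G -> Q},
    @lawP G Q Q' R a b s = @lawMu G Q Q' R al be s.
Proof.
move=> gz al be s.
have cq : #|` Q'| = #|fset_sub_type Q'| by rewrite -cardfE.
case/andP: ha => a0 a1; case/andP: hb => b0 b1.
have pA : 0 < (1 - a) / b by rewrite divr_gt0 // subr_gt0.
have pB : 0 < 1 + (#|` Q'|)%:R * a / (1 - a).
  by rewrite addr_gt0 // divr_gt0 ?mulr_gt0 ?ltr0n // subr_gt0.
apply: (law_eq (EA := (1 - a) / b) (EB := 1 + (#|` Q'|)%:R * a / (1 - a))).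
- by rewrite -cq.
- exact: gz.
- by rewrite a0 a1.
- exact: b0.
- by rewrite /al lnK // posrE.
- by rewrite /be lnK // posrE.
- by [].
- by rewrite cq.
Qed.
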